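(* Let $L\ge2$, $C\ge1$, fix an input $x$ and a label $y\in\{1,\dots,C\}$, and let $A(\bm\theta),B(\bm\theta)\in\mathbb R^C$ be the functions of the ReLU network parameters $\bm\theta=(W_1,b_1,\dots,W_L,b_L)$ defined in the context, so that $F_x(\bm\theta)=A(\bm\theta)-B(\bm\theta)$ is the network output. Define the cross-entropy loss $\mathcal L^{\mathrm{CE}}_{x,y}(\bm\theta)=\operatorname{LSE}(F_x(\bm\theta))-A_y(\bm\theta)+B_y(\bm\theta)$, where $\operatorname{LSE}(t)=\log\sum_{c=1}^Ce^{t_c}=\max_{p\in\Delta_C}\{\langle p,t\rangle-\sum_cp_c\log p_c\}$ and $\Delta_C=\{p\ge0:\mathbf 1^\top p=1\}$. Let $g(\bm\theta)=\operatorname{LSE}(F_x(\bm\theta))+\mathbf 1^\top B(\bm\theta)+B_y(\bm\theta)$ and $h(\bm\theta)=A_y(\bm\theta)+\mathbf 1^\top B(\bm\theta)$. Then $\mathcal L^{\mathrm{CE}}_{x,y}=g-h$, and for every block $\theta_l=(W_l,b_l)$, with all other blocks fixed, $g$ and $h$ are convex in $\theta_l$; i.e. this is a BDC decomposition of $\mathcal L^{\mathrm{CE}}_{x,y}$.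
   Context: Network: $W_l\in\mathbb R^{d_l\times d_{l-1}}$, $b_l\in\mathbb R^{d_l}$ for $l<L$, $W_L\in\mathbb R^{C\times d_{L-1}}$, $b_L\in\mathbb R^C$; $\sigma(t)=\max\{t,0\}$ entrywise; vector max coordinatewise. Set $Z_1^+=\sigma(W_1x+b_1)$, $Z_1^-=0$ and for $l=1,\dots,L-2$: $p_{l+1}=\sigma(W_{l+1})Z_l^++\sigma(-W_{l+1})Z_l^-+b_{l+1}$, $Z_{l+1}^-=\sigma(W_{l+1})Z_l^-+\sigma(-W_{l+1})Z_l^+$, $Z_{l+1}^+=\max\{p_{l+1},Z_{l+1}^-\}$. Then $A(\bm\theta)=\sigma(W_L)Z_{L-1}^++\sigma(-W_L)Z_{L-1}^-+\sigma(b_L)$ and $B(\bm\theta)=\sigma(W_L)Z_{L-1}^-+\sigma(-W_L)Z_{L-1}^++\sigma(-b_L)$; $A_y,B_y$ denote their $y$-th coordinates. *)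

(* Defs.v *)
From HB Require Import structures.
From mathcomp Require Import all_boot all_order all_algebra.
From mathcomp Require Import reals.
From mathcomp Require Import sequences exp.
Set Implicit Arguments. Unset Strict Implicit. Unset Printing Implicit Defensive.
Import Order.TTheory GRing.Theory Num.Theory.
Local Open Scope ring_scope.

Section Net.
Variable R : realType.
(* widths: d l = d_l; layer l (1 <= l <= L) has W l : d_l x d_{l-1}, b l : d_l.
   The number of layers is L = n.+2 (so L >= 2) and C = d L. *)
Variable d : nat -> nat.

Definition Params := forall l : nat, 'M[R]_(d l, d l.-1).
Definition Biases := forall l : nat, 'cV[R]_(d l).

Definition relu {m k : nat} (M : 'M[R]_(m, k)) : 'M[R]_(m, k) :=
  map_mx (fun t => Num.max t 0) M.
Definition vmax {m k : nat} (M N : 'M[R]_(m, k)) : 'M[R]_(m, k) :=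
  \matrix_(i, j) Num.max (M i j) (N i j).

Variables (x : 'cV[R]_(d 0%N)) (W : Params) (b : Biases).

(* Zpm k = (Z_{k+1}^+, Z_{k+1}^-) *)
Fixpoint Zpm (k : nat) : 'cV[R]_(d k.+1) * 'cV[R]_(d k.+1) :=
  match k return 'cV[R]_(d k.+1) * 'cV[R]_(d k.+1) with
  | 0 => (relu (W 1%N *m x + b 1%N), 0)
  | k'.+1 =>
      let Zp := (Zpm k').1 in let Zm := (Zpm k').2 in
      let p := relu (W k'.+2) *m Zp + relu (- W k'.+2) *m Zm + b k'.+2 in
      let Zm' := relu (W k'.+2) *m Zm + relu (- W k'.+2) *m Zp in
      (vmax p Zm', Zm')
  end.

Variable n : nat.

Definition netA : 'cV[R]_(d n.+2) :=
  relu (W n.+2) *m (Zpm n).1 + relu (- W n.+2) *m (Zpm n).2 + relu (b n.+2).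
Definition netB : 'cV[R]_(d n.+2) :=
  relu (W n.+2) *m (Zpm n).2 + relu (- W n.+2) *m (Zpm n).1 + relu (- b n.+2).
Definition netF : 'cV[R]_(d n.+2) := netA - netB.

End Net.

Definition LSE {R : realType} {C : nat} (t : 'cV[R]_C) : R :=
  ln (\sum_(c < C) expR (t c 0)).

Section Losses.
Variables (R : realType) (d : nat -> nat) (n : nat) (x : 'cV[R]_(d 0%N)) (y : 'I_(d n.+2)).

Definition LCE (W : Params R d) (b : Biases R d) : R :=
  LSE (netF x W b n) - netA x W b n y 0 + netB x W b n y 0.

Definition gDC (W : Params R d) (b : Biases R d) : R :=
  LSE (netF x W b n) + (\sum_(c < d n.+2) netB x W b n c 0) + netB x W b n y 0.

Definition hDC (W : Params R d) (b : Biases R d) : R :=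
  netA x W b n y 0 + \sum_(c < d n.+2) netB x W b n c 0.
End Losses.

Definition block_convex {R : realType} {d : nat -> nat} (L l : nat)
  (f : Params R d -> Biases R d -> R) : Prop :=
  forall (W1 W2 : Params R d) (b1 b2 : Biases R d) (t : R),
    (forall k, (1 <= k <= L)%N -> k != l -> W1 k = W2 k /\ b1 k = b2 k) ->
    0 <= t <= 1 ->
    f (fun k => t *: W1 k + (1 - t) *: W2 k) (fun k => t *: b1 k + (1 - t) *: b2 k)
    <= t * f W1 b1 + (1 - t) * f W2 b2.

(* Main.v *)
Require Import Defs.
From HB Require Import structures.
From mathcomp Require Import all_boot all_order all_algebra.
From mathcomp Require Import reals.
From mathcomp Require Import sequences exp.
From mathcomp Require Import ring lra.
Set Implicit Arguments. Unset Strict Implicit.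
Import Order.TTheory GRing.Theory Num.Theory.
Local Open Scope ring_scope.

Section Scalar.
Variable R : realType.
Implicit Types (t a b : R).

Lemma max_cvx t p1 p2 pt m1 m2 mt : 0 <= t <= 1 ->
  pt <= t * p1 + (1 - t) * p2 -> mt <= t * m1 + (1 - t) * m2 ->
  Num.max pt mt <= t * Num.max p1 m1 + (1 - t) * Num.max p2 m2.
Proof.
move=> /andP[t0 t1] hp hm.
have hp1 : p1 <= Num.max p1 m1 by rewrite le_max lexx.
have hm1 : m1 <= Num.max p1 m1 by rewrite le_max lexx orbT.
have hp2 : p2 <= Num.max p2 m2 by rewrite le_max lexx.
have hm2 : m2 <= Num.max p2 m2 by rewrite le_max lexx orbT.
rewrite ge_max; apply/andP; split; nra.
Qed.

Lemma relu_cvx t a1 a2 : 0 <= t <= 1 ->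
  Num.max (t * a1 + (1 - t) * a2) 0 <= t * Num.max a1 0 + (1 - t) * Num.max a2 0.
Proof. move=> ht; apply: max_cvx => //; lra. Qed.

Lemma expR_cvx t a b : 0 <= t <= 1 ->
  expR (t * a + (1 - t) * b) <= t * expR a + (1 - t) * expR b.
Proof.
move=> /andP[t0 t1].
set m := t * a + (1 - t) * b.
have E0 := expR_gt0 m.
have ha : expR m * (1 + (a - m)) <= expR a.
  have -> : expR a = expR m * expR (a - m) by rewrite -expRD addrC subrK.
  by apply: ler_wpM2l; [exact: ltW|exact: expR_ge1Dx].
have hb : expR m * (1 + (b - m)) <= expR b.
  have -> : expR b = expR m * expR (b - m) by rewrite -expRD addrC subrK.
  by apply: ler_wpM2l; [exact: ltW|exact: expR_ge1Dx].
have h1 : 0 <= t * (expR a - expR m * (1 + (a - m))).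
  by apply: mulr_ge0 => //; rewrite subr_ge0.
have h2 : 0 <= (1 - t) * (expR b - expR m * (1 + (b - m))).
  by apply: mulr_ge0; rewrite subr_ge0.
rewrite /m in h1 h2 *. nra.
Qed.

Definition lse {C : nat} (f : 'I_C -> R) := ln (\sum_(c < C) expR (f c)).

Lemma sum_exp_gt0 {C : nat} (hC : (0 < C)%N) (f : 'I_C -> R) :
  0 < \sum_(c < C) expR (f c).
Proof.
pose i0 : 'I_C := Ordinal hC.
apply: (lt_le_trans (expR_gt0 (f i0))).
rewrite (bigD1 i0) //= lerDl sumr_ge0 // => i _; exact: ltW (expR_gt0 _).
Qed.

Lemma lse_le {C : nat} (hC : (0 < C)%N) (f g : 'I_C -> R) :
  (forall c, f c <= g c) -> lse f <= lse g.
Proof.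
move=> hfg; rewrite /lse ler_ln ?posrE ?sum_exp_gt0 //.
by apply: ler_sum => c _; rewrite ler_expR.
Qed.

Lemma lse_shift {C : nat} (hC : (0 < C)%N) (f : 'I_C -> R) s :
  lse f + s = lse (fun c => f c + s).
Proof.
rewrite /lse.
have -> : \sum_(c < C) expR (f c + s) = (\sum_(c < C) expR (f c)) * expR s.
  by rewrite mulr_suml; apply: eq_bigr => c _; rewrite expRD.
by rewrite lnM ?posrE ?sum_exp_gt0 ?expR_gt0 // expRK.
Qed.

Lemma lse_cvx {C : nat} (hC : (0 < C)%N) (u v : 'I_C -> R) t : 0 <= t <= 1 ->
  lse (fun c => t * u c + (1 - t) * v c) <= t * lse u + (1 - t) * lse v.
Proof.
move=> ht; rewrite /lse.
set Su := \sum_(c < C) expR (u c).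
set Sv := \sum_(c < C) expR (v c).
have Su0 : 0 < Su by apply: sum_exp_gt0.
have Sv0 : 0 < Sv by apply: sum_exp_gt0.
set s := t * ln Su + (1 - t) * ln Sv.
rewrite -[s]expRK ler_ln ?posrE ?sum_exp_gt0 ?expR_gt0 //.
have key c : expR (t * u c + (1 - t) * v c) <=
    expR s * (t * (expR (u c) / Su) + (1 - t) * (expR (v c) / Sv)).
  have -> : t * u c + (1 - t) * v c =
      s + (t * (u c - ln Su) + (1 - t) * (v c - ln Sv)) by rewrite /s; ring.
  rewrite expRD; apply: ler_wpM2l; first exact: ltW (expR_gt0 _).
  apply: le_trans (expR_cvx _ _ ht) _.
  by rewrite !expRB !lnK ?posrE.
apply: (le_trans (ler_sum _ (fun c _ => key c))).
rewrite -mulr_sumr big_split /= -!mulr_sumr -!mulr_suml -/Su -/Sv.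
rewrite !divff ?gt_eqF // ?mulr1.
by rewrite addrCA subrr addr0 mulr1.
Qed.

End Scalar.
Unset Implicit Arguments. Set Strict Implicit.
Section Net2.
Variables (R : realType) (d : nat -> nat) (x : 'cV[R]_(d 0%N)).

Lemma relu_ge0 m k (M : 'M[R]_(m, k)) i j : 0 <= relu M i j.
Proof. by rewrite mxE le_max lexx orbT. Qed.

Lemma Zpm_ge0 (W : Params R d) (b : Biases R d) k i :
  0 <= (Zpm x W b k).2 i 0 /\ 0 <= (Zpm x W b k).1 i 0.
Proof.
elim: k i => [|k IH] i /=.
  by rewrite mxE relu_ge0.
have h2 : 0 <= (relu (W k.+2) *m (Zpm x W b k).2 +
               relu (- W k.+2) *m (Zpm x W b k).1) i 0.
  rewrite !mxE; apply: addr_ge0; apply: sumr_ge0 => m _;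
    apply: mulr_ge0; rewrite ?relu_ge0 //; have [] := IH m => //.
split=> //; rewrite mxE le_max; apply/orP; right; exact: h2.
Qed.

Lemma Zpm_ext (W W' : Params R d) (b b' : Biases R d) k :
  (forall j, (1 <= j <= k.+1)%N -> W j = W' j /\ b j = b' j) ->
  Zpm x W b k = Zpm x W' b' k.
Proof.
elim: k => [|k IH] H /=.
  by have [-> ->] := H 1%N isT.
rewrite IH; last by move=> j /andP[j1 jk]; apply: H; rewrite j1 /= ltnW.
by have [-> ->] := H k.+2 (leqnn _).
Qed.

Variables (n : nat) (l : nat) (W1 W2 : Params R d) (b1 b2 : Biases R d) (t : R).
Hypothesis Hag : forall k, (1 <= k <= n.+2)%N -> k != l -> W1 k = W2 k /\ b1 k = b2 k.
Hypothesis ht : 0 <= t <= 1.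

Definition Wt : Params R d := fun k => t *: W1 k + (1 - t) *: W2 k.
Definition bt : Biases R d := fun k => t *: b1 k + (1 - t) *: b2 k.

Lemma conv_same m k (M : 'M[R]_(m, k)) : t *: M + (1 - t) *: M = M.
Proof. by rewrite -scalerDl addrCA subrr addr0 scale1r. Qed.

Lemma Wt_same j : (1 <= j <= n.+2)%N -> j != l -> Wt j = W1 j /\ bt j = b1 j.
Proof. by move=> h1 h2; have [e1 e2] := Hag j h1 h2; rewrite /Wt /bt e1 e2 !conv_same. Qed.

Lemma prod_cvx j (f : 'M[R]_(d j, d j.-1) -> 'M[R]_(d j, d j.-1))
  (hf0 : forall M i m, 0 <= f M i m)
  (hfc : forall i m, f (Wt j) i m <= t * f (W1 j) i m + (1 - t) * f (W2 j) i m)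
  (Z1 Z2 Zt : 'cV[R]_(d j.-1))
  (hZ0 : forall m, 0 <= Zt m 0)
  (hcase : (Z1 = Zt /\ Z2 = Zt) \/
           (W1 j = W2 j /\ Wt j = W1 j /\ forall m, Zt m 0 <= t * Z1 m 0 + (1 - t) * Z2 m 0)) i :
  (f (Wt j) *m Zt) i 0 <= t * (f (W1 j) *m Z1) i 0 + (1 - t) * (f (W2 j) *m Z2) i 0.
Proof.
rewrite !mxE !mulr_sumr -big_split; apply: ler_sum => m _ /=.
case: hcase => [[-> ->]|[eW [eWt hZ]]].
  by rewrite !mulrA -mulrDl; apply: ler_wpM2r.
rewrite eWt -eW mulrCA (mulrCA (1 - t)) -mulrDr; apply: ler_wpM2l => //.
Qed.

Lemma addmxE' m k (A B : 'M[R]_(m, k)) i j : (A + B) i j = A i j + B i j.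
Proof. by rewrite mxE. Qed.
Lemma vmaxE m k (A B : 'M[R]_(m, k)) i j : vmax A B i j = Num.max (A i j) (B i j).
Proof. by rewrite mxE. Qed.
Lemma scalemxE' m k a (A : 'M[R]_(m, k)) i j : (a *: A) i j = a * A i j.
Proof. by rewrite mxE. Qed.
Lemma btE j i : bt j i 0 = t * b1 j i 0 + (1 - t) * b2 j i 0.
Proof. by rewrite /bt !mxE. Qed.

Lemma relu_hfc j i m : relu (Wt j) i m <= t * relu (W1 j) i m + (1 - t) * relu (W2 j) i m.
Proof. rewrite /Wt !mxE; exact: relu_cvx. Qed.
Lemma relu_hfcN j i m :
  relu (- Wt j) i m <= t * relu (- W1 j) i m + (1 - t) * relu (- W2 j) i m.
Proof. rewrite /Wt !mxE opprD -!mulrN; exact: relu_cvx. Qed.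

Definition Zcv k := forall i,
  (Zpm x Wt bt k).1 i 0 <= t * (Zpm x W1 b1 k).1 i 0 + (1 - t) * (Zpm x W2 b2 k).1 i 0 /\
  (Zpm x Wt bt k).2 i 0 <= t * (Zpm x W1 b1 k).2 i 0 + (1 - t) * (Zpm x W2 b2 k).2 i 0.

Lemma hcase k : (k <= n)%N -> Zcv k ->
  (Zpm x W1 b1 k = Zpm x Wt bt k /\ Zpm x W2 b2 k = Zpm x Wt bt k) \/
  (W1 k.+2 = W2 k.+2 /\ Wt k.+2 = W1 k.+2).
Proof.
move=> hk IH; case: (eqVneq k.+2 l) => [ekl|nkl].
  left.
  have hj : forall j, (1 <= j <= k.+1)%N -> (1 <= j <= n.+2)%N /\ j != l.
    move=> j /andP[j1 jk]; rewrite j1 /= -ekl; split.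
      by apply: (leq_trans jk); rewrite ltnS ltnW.
    by rewrite neq_ltn ltnS jk.
  split; apply: Zpm_ext => j /hj [h1 h2]; have [e1 e2] := Hag j h1 h2;
    have [e3 e4] := Wt_same j h1 h2; by rewrite e3 e4 ?e1 ?e2.
right; have h1 : (1 <= k.+2 <= n.+2)%N by rewrite /= !ltnS.
have [e1 _] := Hag _ h1 nkl; have [e3 _] := Wt_same _ h1 nkl; by [].
Qed.

Lemma Zcvx k : (k <= n)%N -> Zcv k.
Proof.
elim: k => [|k IH] hk i /=.
  have e : Wt 1 *m x + bt 1 = t *: (W1 1 *m x + b1 1) + (1 - t) *: (W2 1 *m x + b2 1).
    by rewrite /Wt /bt mulmxDl -!scalemxAl !scalerDr addrACA.
  rewrite e; split; last by rewrite !mxE !mulr0 addr0.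
  rewrite !mxE; exact: relu_cvx.
have hk' : (k <= n)%N by apply: ltnW.
have IHk := IH hk'.
have hc := hcase _ hk' IHk.
have g m := Zpm_ge0 Wt bt k m.
have hc1 : ((Zpm x W1 b1 k).1 = (Zpm x Wt bt k).1 /\ (Zpm x W2 b2 k).1 = (Zpm x Wt bt k).1) \/
   (W1 k.+2 = W2 k.+2 /\ Wt k.+2 = W1 k.+2 /\ forall m,
     (Zpm x Wt bt k).1 m 0 <= t * (Zpm x W1 b1 k).1 m 0 + (1 - t) * (Zpm x W2 b2 k).1 m 0).
  by case: hc => [[-> ->]|[? ?]]; [left|right; split=> //; split=> // m; have [] := IHk m].
have hc2 : ((Zpm x W1 b1 k).2 = (Zpm x Wt bt k).2 /\ (Zpm x W2 b2 k).2 = (Zpm x Wt bt k).2) \/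
   (W1 k.+2 = W2 k.+2 /\ Wt k.+2 = W1 k.+2 /\ forall m,
     (Zpm x Wt bt k).2 m 0 <= t * (Zpm x W1 b1 k).2 m 0 + (1 - t) * (Zpm x W2 b2 k).2 m 0).
  by case: hc => [[-> ->]|[? ?]]; [left|right; split=> //; split=> // m; have [] := IHk m].
have pa1 := prod_cvx k.+2 (@relu R _ _) (@relu_ge0 _ _) (relu_hfc k.+2) _ _ _ (fun m => (g m).2) hc1 i.
have pa2 := prod_cvx k.+2 (@relu R _ _) (@relu_ge0 _ _) (relu_hfc k.+2) _ _ _ (fun m => (g m).1) hc2 i.
have pb1 := prod_cvx k.+2 (fun M => relu (- M)) (fun M => @relu_ge0 _ _ (- M)) (relu_hfcN k.+2) _ _ _ (fun m => (g m).2) hc1 i.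
have pb2 := prod_cvx k.+2 (fun M => relu (- M)) (fun M => @relu_ge0 _ _ (- M)) (relu_hfcN k.+2) _ _ _ (fun m => (g m).1) hc2 i.
simpl in pb1, pb2.
rewrite !vmaxE !addmxE' !scalemxE'; split; last by lra.
apply: max_cvx => //; lra.
Qed.

Lemma submxE' m k (A B : 'M[R]_(m, k)) i j : (A - B) i j = A i j - B i j.
Proof. by rewrite !mxE. Qed.
Lemma relu_hfb j i m : relu (bt j) i m <= t * relu (b1 j) i m + (1 - t) * relu (b2 j) i m.
Proof. rewrite /bt !mxE; exact: relu_cvx. Qed.

Lemma AB_cvx c :
  netA x Wt bt n c 0 <= t * netA x W1 b1 n c 0 + (1 - t) * netA x W2 b2 n c 0 /\
  netB x Wt bt n c 0 <= t * netB x W1 b1 n c 0 + (1 - t) * netB x W2 b2 n c 0.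
Proof.
have IHk := Zcvx _ (leqnn n).
have hc := hcase _ (leqnn n) IHk.
have g m := Zpm_ge0 Wt bt n m.
have hc1 : ((Zpm x W1 b1 n).1 = (Zpm x Wt bt n).1 /\ (Zpm x W2 b2 n).1 = (Zpm x Wt bt n).1) \/
   (W1 n.+2 = W2 n.+2 /\ Wt n.+2 = W1 n.+2 /\ forall m,
     (Zpm x Wt bt n).1 m 0 <= t * (Zpm x W1 b1 n).1 m 0 + (1 - t) * (Zpm x W2 b2 n).1 m 0).
  by case: hc => [[-> ->]|[? ?]]; [left|right; split=> //; split=> // m; have [] := IHk m].
have hc2 : ((Zpm x W1 b1 n).2 = (Zpm x Wt bt n).2 /\ (Zpm x W2 b2 n).2 = (Zpm x Wt bt n).2) \/
   (W1 n.+2 = W2 n.+2 /\ Wt n.+2 = W1 n.+2 /\ forall m,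
     (Zpm x Wt bt n).2 m 0 <= t * (Zpm x W1 b1 n).2 m 0 + (1 - t) * (Zpm x W2 b2 n).2 m 0).
  by case: hc => [[-> ->]|[? ?]]; [left|right; split=> //; split=> // m; have [] := IHk m].
have pa1 := prod_cvx n.+2 (@relu R _ _) (@relu_ge0 _ _) (relu_hfc n.+2) _ _ _ (fun m => (g m).2) hc1 c.
have pa2 := prod_cvx n.+2 (@relu R _ _) (@relu_ge0 _ _) (relu_hfc n.+2) _ _ _ (fun m => (g m).1) hc2 c.
have pb1 := prod_cvx n.+2 (fun M => relu (- M)) (fun M => @relu_ge0 _ _ (- M)) (relu_hfcN n.+2) _ _ _ (fun m => (g m).2) hc1 c.
have pb2 := prod_cvx n.+2 (fun M => relu (- M)) (fun M => @relu_ge0 _ _ (- M)) (relu_hfcN n.+2) _ _ _ (fun m => (g m).1) hc2 c.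
simpl in pb1, pb2.
have q1 := relu_hfb n.+2 c 0.
have q2 : relu (- bt n.+2) c 0 <= t * relu (- b1 n.+2) c 0 + (1 - t) * relu (- b2 n.+2) c 0.
  rewrite /bt !mxE opprD -!mulrN; exact: relu_cvx.
rewrite /netA /netB !addmxE'; split; lra.
Qed.

Variables (y : 'I_(d n.+2)) (hC : (0 < d n.+2)%N).

Lemma sumB_cvx (P : pred 'I_(d n.+2)) :
  \sum_(c | P c) netB x Wt bt n c 0 <=
  t * \sum_(c | P c) netB x W1 b1 n c 0 + (1 - t) * \sum_(c | P c) netB x W2 b2 n c 0.
Proof.
rewrite !mulr_sumr -big_split; apply: ler_sum => c _; exact: (AB_cvx c).2.
Qed.

Lemma h_cvx : hDC x y Wt bt <= t * hDC x y W1 b1 + (1 - t) * hDC x y W2 b2.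
Proof.
rewrite /hDC; have := (AB_cvx y).1; have := sumB_cvx xpredT; lra.
Qed.

Lemma eqg (W : Params R d) (b : Biases R d) : gDC x y W b =
  lse (fun c => netA x W b n c 0 + \sum_(c' | c' != c) netB x W b n c' 0) + netB x W b n y 0.
Proof.
rewrite /gDC /LSE -/(lse _) (lse_shift hC); congr (ln _ + _).
apply: eq_bigr => c _; congr expR; rewrite /netF submxE' (bigD1 c) //=; ring.
Qed.

Lemma g_cvx : gDC x y Wt bt <= t * gDC x y W1 b1 + (1 - t) * gDC x y W2 b2.
Proof.
rewrite !eqg.
set G1 := (fun c => _ + \sum_(c' | c' != c) netB x W1 b1 n c' 0).
set G2 := (fun c => _ + \sum_(c' | c' != c) netB x W2 b2 n c' 0).
have h1 : lse (fun c => netA x Wt bt n c 0 + \sum_(c' | c' != c) netB x Wt bt n c' 0)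
   <= lse (fun c => t * G1 c + (1 - t) * G2 c).
  apply: lse_le => // c; rewrite /G1 /G2.
  have := (AB_cvx c).1; have := sumB_cvx (fun c' => c' != c); lra.
have h2 := lse_cvx hC G1 G2 ht.
have h3 := (AB_cvx y).2.
lra.
Qed.
End Net2.

Theorem corollary3p5 (R : realType) (d : nat -> nat) (n : nat)
  (HC : (0 < d n.+2)%N) (x : 'cV[R]_(d 0%N)) (y : 'I_(d n.+2)) :
  (forall (W : Params R d) (b : Biases R d),
     LCE x y W b = gDC x y W b - hDC x y W b) /\
  (forall l : nat, (1 <= l <= n.+2)%N ->
     block_convex n.+2 l (gDC x y) /\ block_convex n.+2 l (hDC x y)).
Proof.
split.
  by move=> W b; rewrite /LCE /gDC /hDC; ring.
move=> l _; split=> W1 W2 b1 b2 t Hag ht.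
  exact: (@g_cvx R d x n l W1 W2 b1 b2 t Hag ht y HC).
exact: (@h_cvx R d x n l W1 W2 b1 b2 t Hag ht y).
Qed.
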